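(* (1) Let $\bar B\in\mathbb F_q[X]^{(\ell+1)\times(\ell+1)}$ represent a basis of $\varphi(M_{s,\ell})$. If $\bar B\,\bar W_\ell$ is in weak Popov form, then one of the rows of $\bar B$ corresponds to a polynomial in $\varphi(M_{s,\ell})$ of minimal $(1,-1)$-weighted degree among its nonzero elements. (2) If $\bar B^{(0)},\dots,\bar B^{(\ell)}\in\mathbb F_q[X,Y]$ is a basis of $\varphi(M_{s,\ell})$, then $\bar B^{(0)},\dots,\bar B^{(\ell)},\,(L(X)Y)^{\ell-s+1}(Y-\bar R(X))^s$ is a basis of $\varphi(M_{s,\ell+1})$, and $\bar G(X)^{s+1},\,\bar B^{(0)}(Y-\bar R(X)),\dots,\bar B^{(\ell)}(Y-\bar R(X))$ is a basis of $\varphi(M_{s+1,\ell+1})$, where in each case $\varphi$ is the map for the corresponding parameters.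
   Context: Let $\mathbb F_q$ be a finite field, $1\le k<n<q$, $\alpha_0,\dots,\alpha_{n-1}$ distinct nonzero elements of $\mathbb F_q$, $w_0,\dots,w_{n-1}$ nonzero elements of $\mathbb F_q$, and $r\in\mathbb F_q^n$ with $r_i=0$ for $i=0,\dots,k-1$; $r_i'=r_i/w_i$. Let $G=\prod_{i=0}^{n-1}(X-\alpha_i)$, $R$ the unique polynomial of degree $<n$ with $R(\alpha_i)=r_i'$, $L=\prod_{i=0}^{k-1}(X-\alpha_i)$, $\bar G=G/L$, $\bar R=R/L$. For positive integers $s\le\ell$, $M_{s,\ell}$ is the $\mathbb F_q[X]$-module of all $Q\in\mathbb F_q[X,Y]$ of $Y$-degree at most $\ell$ such that for each $i$, $Q(X+\alpha_i,Y+r_i')$ has no monomials of total degree less than $s$; $\varphi(Q)=L(X)^{-s}Q(X,L(X)Y)$ (a polynomial) and $\varphi(M_{s,\ell})$ is its image. The $(1,-1)$-weighted degree of a nonzero bivariate polynomial is the maximum of $i-j$ over its monomials $X^iY^j$. A polynomial $\sum_tQ_t(X)Y^t$ has coefficient vector $(Q_0,Q_1,\dots)$; a matrix represents a basis if its rows are the coefficient vectors of the basis elements. $\bar W_\ell=\mathrm{diag}(X^\ell,X^{\ell-1},\dots,X,1)$. For $v\in\mathbb F_q[X]^m$, $\deg v=\max_i\deg v_i$ and $\mathrm{LP}(v)=\max\{i:\deg v_i=\deg v\}$; a matrix is in weak Popov form if its rows have pairwise different leading positions. *)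

(* Defs.v *)
From HB Require Import structures.
From mathcomp Require Import all_boot all_order all_algebra all_field.
Set Implicit Arguments. Unset Strict Implicit. Unset Printing Implicit Defensive.
Import Order.TTheory GRing.Theory Num.Theory.
Local Open Scope ring_scope.

(* Bivariate polynomials over F are elements of {poly {poly F}}:
   the outer variable is Y, coefficients are polynomials in X.
   Q = \sum_t Q`_t(X) Y^t, so the coefficient vector is (Q`_0, Q`_1, ...). *)

Section Defs.
Variable F : finFieldType.

Definition shiftXY (a b : F) (Q : {poly {poly F}}) : {poly {poly F}} :=
  map_poly (fun c : {poly F} => c \Po ('X + a%:P)) (Q \Po ('X + (b%:P)%:P)).

Definition no_low_monomials (s : nat) (Q : {poly {poly F}}) : Prop :=
  forall t j : nat, (t + j < s)%N -> (Q`_t)`_j = 0.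

Definition inM (n : nat) (alpha rp : 'I_n -> F) (s l : nat)
    (Q : {poly {poly F}}) : Prop :=
  (size Q <= l.+1)%N /\
  forall i : 'I_n, no_low_monomials s (shiftXY (alpha i) (rp i) Q).

Definition Lpoly (n k : nat) (alpha : 'I_n -> F) : {poly F} :=
  \prod_(i < n | (i < k)%N) ('X - (alpha i)%:P).

Definition Gpoly (n : nat) (alpha : 'I_n -> F) : {poly F} :=
  \prod_(i < n) ('X - (alpha i)%:P).

Definition phi (L : {poly F}) (s : nat) (Q : {poly {poly F}}) : {poly {poly F}} :=
  \poly_(t < size Q) ((Q`_t * L ^+ t) %/ L ^+ s).

Definition inPhiM (n k : nat) (alpha rp : 'I_n -> F) (s l : nat)
    (P : {poly {poly F}}) : Prop :=
  exists Q, inM alpha rp s l Q /\ P = phi (Lpoly k alpha) s Q.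

Definition is_basis (P : {poly {poly F}} -> Prop) (m : nat)
    (b : 'I_m -> {poly {poly F}}) : Prop :=
  [/\ forall i, P (b i),
      forall c : 'I_m -> {poly F},
        \sum_(i < m) (c i)%:P * b i = 0 -> forall i, c i = 0
    & forall Q, P Q -> exists c : 'I_m -> {poly F},
        Q = \sum_(i < m) (c i)%:P * b i].

Definition rowpoly (m m' : nat) (B : 'M[{poly F}]_(m, m')) (i : 'I_m)
  : {poly {poly F}} := \sum_(t < m') (B i t)%:P * 'X^t.

(* (1,-1)-weighted degree: max over monomials X^a Y^t of a - t
   (meaningful for nonzero Q; the start value -size Q is below every term) *)
Definition wdeg (Q : {poly {poly F}}) : int :=
  \big[Num.max/ - (size Q)%:Z]_(t < size Q | Q`_t != 0)
     ((size Q`_t)%:Z - 1 - (t : nat)%:Z).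

(* deg v (via size, equivalent for leading positions of nonzero rows) *)
Definition rowdeg (m m' : nat) (A : 'M[{poly F}]_(m, m')) (i : 'I_m) : nat :=
  \max_(j < m') size (A i j).

Definition LP (m m' : nat) (A : 'M[{poly F}]_(m, m')) (i : 'I_m) : nat :=
  \max_(j < m' | size (A i j) == rowdeg A i) (j : nat).

Definition weak_popov (m m' : nat) (A : 'M[{poly F}]_(m, m')) : Prop :=
  forall i1 i2 : 'I_m, LP A i1 = LP A i2 -> i1 = i2.

Definition Wbar (l : nat) : 'M[{poly F}]_l.+1 :=
  diag_mx (\row_(j < l.+1) 'X^(l - j)).

End Defs.

(* Main.v *)
Require Import Defs.
From HB Require Import structures.
From mathcomp Require Import all_boot all_order all_algebra all_field.
From mathcomp Require Import zify ring.
Set Implicit Arguments. Unset Strict Implicit. Unset Printing Implicit Defensive.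
Import Order.TTheory GRing.Theory Num.Theory.
Local Open Scope ring_scope.

Section Aux.
Variable F : finFieldType.
Local Notation P2 := {poly {poly F}}.

Lemma dvdXnP (m : nat) (p : {poly F}) :
  (forall j, (j < m)%N -> p`_j = 0) <-> 'X^m %| p.
Proof.
split=> [H|/dvdpP [q ->] j jm]; last by rewrite coefMXn jm.
have ->: p = drop_poly m p * 'X^m.
  rewrite -{1}(poly_take_drop m p); suff ->: take_poly m p = 0 by rewrite add0r.
  by apply/polyP=> i; rewrite coef_take_poly coef0; case: ifP => // /H.
exact: dvdp_mulIr.
Qed.

Definition nlm (m : nat) (Q : P2) := forall t, 'X^(m - t) %| Q`_t.

Lemma nlmE s Q : no_low_monomials s Q <-> nlm s Q.
Proof.
split=> H t.
  by apply/dvdXnP => j jl; apply: H; rewrite -ltn_subRL.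
by move=> j tj; apply: (proj2 (dvdXnP _ _) (H t)); rewrite ltn_subRL.
Qed.

Lemma dvdp_sumP (d : {poly F}) (I : Type) (r : seq I) (P : pred I) (f : I -> {poly F}) :
  (forall i, P i -> d %| f i) -> d %| \sum_(i <- r | P i) f i.
Proof.
move=> H; apply: (big_ind (fun x => d %| x)); [exact: dvdp0 | exact: dvdp_add | exact: H].
Qed.

Lemma nlm0 Q : nlm 0 Q.
Proof. by move=> t; rewrite sub0n expr0 dvd1p. Qed.

Lemma nlmD m P Q : nlm m P -> nlm m Q -> nlm m (P + Q).
Proof. by move=> HP HQ t; rewrite coefD dvdp_add. Qed.

Lemma nlmN m P : nlm m P -> nlm m (- P).
Proof. by move=> HP t; rewrite coefN dvdpNr. Qed.

Lemma nlmM m1 m2 P Q : nlm m1 P -> nlm m2 Q -> nlm (m1 + m2) (P * Q).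
Proof.
move=> HP HQ t; rewrite coefM; apply: dvdp_sumP => j _.
apply: dvdp_trans (dvdp_mul (HP j) (HQ (t - j)%N)).
rewrite -exprD dvdp_exp2l //.
have := ltn_ord j; rewrite ltnS => jt; lia.
Qed.

Lemma nlmX m P e : nlm m P -> nlm (m * e) (P ^+ e).
Proof.
move=> HP; elim: e => [|e IH]; first by rewrite muln0; apply: nlm0.
by rewrite exprS mulnS; apply: nlmM.
Qed.

Lemma nlmC m c : 'X^m %| c -> nlm m c%:P.
Proof.
move=> H [|t]; first by rewrite coefC subn0.
by rewrite coefC /= dvdp0.
Qed.

Lemma nlmCM m c Q : nlm m Q -> nlm m (c%:P * Q).
Proof. by move=> HQ; rewrite -[m]add0n; apply: nlmM => //; apply: nlm0. Qed.

Lemma nlm_lin h : 'X %| h -> nlm 1 ('X - h%:P).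
Proof.
move=> H [|[|t]]; rewrite coefB coefX coefC /=.
- by rewrite sub0r subn0 expr1 dvdpNr.
- by rewrite subn1 expr0 dvd1p.
- by rewrite subr0 dvdp0.
Qed.

Lemma nlm_cancel s P h : 'X %| h -> nlm s.+1 (P * ('X - h%:P)) -> nlm s P.
Proof.
move=> Hh HT.
have key: forall d t, (s - t <= d)%N -> 'X^(s - t) %| P`_t.
  elim=> [|d IH] t.
    by rewrite leqn0 => /eqP ->; rewrite expr0 dvd1p.
  move=> std; have [st|ts] := leqP s t.
    have ->: (s - t = 0)%N by lia.
    by rewrite expr0 dvd1p.
  have IH1 : 'X^(s - t.+1) %| P`_t.+1 by apply: IH; lia.
  have := HT t.+1; rewrite mulrBr coefB coefMX /= mulrC coefCM.
  have ->: (s.+1 - t.+1 = s - t)%N by lia.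
  move=> H1.
  have H2 : 'X^(s - t) %| h * P`_t.+1.
    have ->: (s - t = 1 + (s - t.+1))%N by lia.
    by rewrite exprD expr1; apply: dvdp_mul.
  by rewrite -(subrK (h * P`_t.+1) P`_t); apply: dvdp_add.
by move=> t; apply: (key (s - t)%N).
Qed.

Lemma nlm_horner m S h : nlm m S -> 'X %| h -> 'X^m %| S.[h].
Proof.
move=> HS Hh; rewrite horner_coef; apply: dvdp_sumP => i _.
apply: dvdp_trans (dvdp_mul (HS i) (dvdp_exp2r i Hh)).
by rewrite -exprD dvdp_exp2l //; lia.
Qed.


Lemma coprime_XsubC_prod (I : eqType) (r : seq I) (al : I -> F) i :
  injective al -> i \notin r ->
  coprimep ('X - (al i)%:P) (\prod_(j <- r) ('X - (al j)%:P)).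
Proof.
move=> inj ir; rewrite big_seq.
apply: (big_ind (coprimep ('X - (al i)%:P))).
- exact: coprimep1.
- by move=> x y hx hy; rewrite coprimepMr hx hy.
- move=> j jr; apply: coprimep_XsubC2; rewrite subr_eq0.
  by apply/eqP => /inj eji; move: ir; rewrite -eji jr.
Qed.

Lemma prod_dvd_seq (I : eqType) (r : seq I) (al : I -> F) m p :
  uniq r -> injective al ->
  (forall i, i \in r -> ('X - (al i)%:P) ^+ m %| p) ->
  (\prod_(i <- r) ('X - (al i)%:P)) ^+ m %| p.
Proof.
move=> ur inj; elim: r ur => [|i r IH] /=.
  by move=> _ _; rewrite big_nil expr1n dvd1p.
case/andP=> ir ur H.
rewrite big_cons exprMn Gauss_dvdp.
  rewrite H ?mem_head //=; apply: IH => // j jr; apply: H.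
  by rewrite in_cons jr orbT.
by apply: coprimep_expl; apply: coprimep_expr; apply: coprime_XsubC_prod.
Qed.

Lemma prod_dvd (n : nat) (al : 'I_n -> F) (P : pred 'I_n) m p :
  injective al ->
  (forall i, P i -> ('X - (al i)%:P) ^+ m %| p) ->
  (\prod_(i < n | P i) ('X - (al i)%:P)) ^+ m %| p.
Proof.
move=> inj H; rewrite -big_filter; apply: prod_dvd_seq => //.
  by apply: filter_uniq; apply: index_enum_uniq.
by move=> i; rewrite mem_filter => /andP [Pi _]; apply: H.
Qed.



Lemma shiftE (a b : F) (Q : P2) :
  shiftXY a b Q = map_poly (comp_poly ('X + a%:P)) (Q \Po ('X + (b%:P)%:P)).
Proof. by []. Qed.

Lemma shiftD (a b : F) (P : P2) (Q : P2) : shiftXY a b (P + Q) = shiftXY a b P + shiftXY a b Q.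
Proof. by rewrite !shiftE !rmorphD. Qed.
Lemma shiftN (a b : F) (P : P2) : shiftXY a b (- P) = - shiftXY a b P.
Proof. by rewrite !shiftE !rmorphN. Qed.
Lemma shiftB (a b : F) (P : P2) (Q : P2) : shiftXY a b (P - Q) = shiftXY a b P - shiftXY a b Q.
Proof. by rewrite shiftD shiftN. Qed.
Lemma shiftM (a b : F) (P : P2) (Q : P2) : shiftXY a b (P * Q) = shiftXY a b P * shiftXY a b Q.
Proof. by rewrite !shiftE !rmorphM. Qed.
Lemma shiftXn (a b : F) (P : P2) (e : nat) : shiftXY a b (P ^+ e) = shiftXY a b P ^+ e.
Proof. by rewrite !shiftE !rmorphXn. Qed.
Lemma shiftC (a b : F) (c : {poly F}) : shiftXY a b c%:P = (c \Po ('X + a%:P))%:P.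
Proof. by rewrite shiftE comp_polyC map_polyC. Qed.
Lemma shiftX (a b : F)  : shiftXY a b 'X = 'X + (b%:P)%:P.
Proof. by rewrite shiftE comp_polyX rmorphD /= map_polyX map_polyC /= comp_polyC. Qed.

End Aux.
Section Main.
Variable F : finFieldType.
Local Notation P2 := {poly {poly F}}.
Variables (n k : nat) (alpha : 'I_n -> F) (rp : 'I_n -> F) (R : {poly F}).
Hypothesis alpha_inj : injective alpha.
Hypothesis rp0 : forall i : 'I_n, (i < k)%N -> rp i = 0.
Hypothesis hR : forall i : 'I_n, R.[alpha i] = rp i.

Local Notation L := (Lpoly k alpha).
Local Notation G := (Gpoly alpha).

Lemma L_monic : L \is monic.
Proof. exact: monic_prod_XsubC. Qed.

Lemma L_neq0 : L != 0.
Proof. exact: monic_neq0 L_monic. Qed.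

Lemma L_dvd_G : L %| G.
Proof.
rewrite /Gpoly (bigID (fun i : 'I_n => (i < k)%N)) /=.
exact: dvdp_mulIl.
Qed.

Lemma L_dvd_R : L %| R.
Proof.
rewrite -[L]expr1; apply: prod_dvd => // i ik.
by rewrite expr1 dvdp_XsubCl; apply/rootP; rewrite hR rp0.
Qed.

Lemma G_root0 i : 'X %| G \Po ('X + (alpha i)%:P).
Proof.
have: root (G \Po ('X + (alpha i)%:P)) 0.
  rewrite /root horner_comp hornerD hornerX hornerC add0r.
  by rewrite /Gpoly horner_prod (bigD1 i) //= hornerXsubC subrr mul0r.
by rewrite -dvdp_XsubCl subr0.
Qed.

Definition sig (Q : P2) : P2 := Q \Po (L%:P * 'X).

Lemma coef_sig Q t : (sig Q)`_t = Q`_t * L ^+ t.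
Proof.
rewrite /sig; elim/poly_ind: Q t => [|Q c IH] t.
  by rewrite comp_poly0 !coef0 mul0r.
rewrite comp_poly_MXaddC !coefD !coefC mulrA !coefMX.
case: t => [|t] /=; first by rewrite !add0r expr0 mulr1.
by rewrite !addr0 coefMC IH exprS -mulrA [L * _]mulrC.
Qed.

Lemma sigD P Q : sig (P + Q) = sig P + sig Q.
Proof. exact: comp_polyD. Qed.
Lemma sigB P Q : sig (P - Q) = sig P - sig Q.
Proof. by rewrite /sig rmorphB. Qed.
Lemma sigM P Q : sig (P * Q) = sig P * sig Q.
Proof. exact: comp_polyM. Qed.
Lemma sigC c : sig c%:P = c%:P.
Proof. exact: comp_polyC. Qed.
Lemma sigX : sig 'X = L%:P * 'X.
Proof. exact: comp_polyX. Qed.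
Lemma sigXn e : sig ('X ^+ e) = (L%:P * 'X) ^+ e.
Proof. by rewrite /sig rmorphXn /= comp_polyX. Qed.
Lemma sig_sum m (c : 'I_m -> {poly F}) (b : 'I_m -> P2) :
  sig (\sum_(i < m) (c i)%:P * b i) = \sum_(i < m) (c i)%:P * sig (b i).
Proof.
rewrite /sig raddf_sum; apply: eq_bigr => i _.
by rewrite /= comp_polyM comp_polyC.
Qed.

Lemma inM_nlm s l (Q : P2) i : inM alpha rp s l Q -> nlm s (shiftXY (alpha i) (rp i) Q).
Proof. by case=> _ H; apply/nlmE. Qed.

Lemma nlm_inM s l (Q : P2) : (size Q <= l.+1)%N ->
  (forall i, nlm s (shiftXY (alpha i) (rp i) Q)) -> inM alpha rp s l Q.
Proof. by move=> H1 H2; split=> // i; apply/nlmE. Qed.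

Lemma inM_exact s l (Q : P2) t : inM alpha rp s l Q -> L ^+ s %| Q`_t * L ^+ t.
Proof.
move=> HQ; have [st|ts] := leqP s t.
  by apply: dvdp_mull; apply: dvdp_exp2l.
have ->: s = ((s - t) + t)%N by rewrite subnK // ltnW.
rewrite exprD; apply: dvdp_mul => //.
apply: prod_dvd => // i ik.
have := inM_nlm i HQ t.
rewrite shiftE rp0 // !raddf0 addr0 comp_polyXr coef_map /=.
move/(dvdp_comp_poly ('X - (alpha i)%:P)).
by rewrite comp_polyXaddC_K comp_Xn_poly.
Qed.


Lemma phiE s l (Q : P2) : inM alpha rp s l Q -> (L ^+ s)%:P * phi L s Q = sig Q.
Proof.
move=> HQ; apply/polyP => t; rewrite coefCM coef_sig coef_poly.
case: ltnP => ts; first by rewrite divpKC // (inM_exact t HQ).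
by rewrite nth_default // mul0r mulr0.
Qed.

Lemma size_phi s (Q : P2) : (size (phi L s Q) <= size Q)%N.
Proof. exact: size_poly. Qed.

Lemma LsC_neq0 s : (L ^+ s)%:P != 0 :> P2.
Proof. by rewrite polyC_eq0 expf_neq0 // L_neq0. Qed.

Lemma LsC_inj s (U V : P2) : (L ^+ s)%:P * U = (L ^+ s)%:P * V -> U = V.
Proof. exact: (mulfI (LsC_neq0 s)). Qed.

Lemma inPhiM_E s l (P : P2) :
  inPhiM k alpha rp s l P <-> exists Q, inM alpha rp s l Q /\ (L ^+ s)%:P * P = sig Q.
Proof.
split=> [[Q [HQ ->]]|[Q [HQ HP]]]; exists Q; split => //.
  exact: (phiE HQ).
by apply: (@LsC_inj s); rewrite HP (phiE HQ).
Qed.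

Lemma inPhiM_size s l (P : P2) : inPhiM k alpha rp s l P -> (size P <= l.+1)%N.
Proof. by case=> Q [[HQ _] ->]; apply: leq_trans (size_phi _ _) HQ. Qed.

Lemma inM_mono s l l' (Q : P2) : (l <= l')%N -> inM alpha rp s l Q -> inM alpha rp s l' Q.
Proof. by move=> ll [H1 H2]; split=> //; apply: leq_trans H1 _. Qed.

Lemma inM_sub s l l' (P Q : P2) (c : {poly F}) :
  inM alpha rp s l' P -> inM alpha rp s l' Q -> (size (P - c%:P * Q)%R <= l.+1)%N ->
  inM alpha rp s l (P - c%:P * Q).
Proof.
move=> HP HQ Hs; apply: nlm_inM => // i.
rewrite shiftB shiftM shiftC; apply: nlmD; first exact: inM_nlm HP.
by apply: nlmN; apply: nlmCM; apply: inM_nlm HQ.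
Qed.

Lemma shift_lin i : exists h : {poly F}, ('X %| h) /\
  (shiftXY (alpha i) (rp i) ('X - R%:P) = 'X - h%:P).
Proof.
exists (R \Po ('X + (alpha i)%:P) - (rp i)%:P); split.
  rewrite -[X in X %| _]subr0 dvdp_XsubCl; apply/rootP.
  by rewrite hornerD hornerN hornerC horner_comp hornerD hornerX hornerC add0r hR subrr.
rewrite shiftB shiftX shiftC rmorphB /=.
by rewrite opprB addrA.
Qed.

Lemma inM_Q0 s l : (s <= l)%N ->
  inM alpha rp s l.+1 (('X ^+ (l - s).+1 * ('X - R%:P) ^+ s) : P2).
Proof.
move=> sl; apply: nlm_inM.
  rewrite size_monicM ?monicXn ?expf_neq0 ?polyXsubC_eq0 //.
  by rewrite size_polyXn size_exp_XsubC; lia.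
move=> i; rewrite shiftM shiftXn shiftXn.
apply: (@nlmM _ 0 s).
  by move: (nlmX (l - s).+1 (nlm0 (shiftXY (alpha i) (rp i) 'X))); rewrite mul0n.
have [h [Hh ->]] := shift_lin i.
by move: (nlmX s (nlm_lin Hh)); rewrite mul1n.
Qed.

Lemma inM_G s l : inM alpha rp s.+1 l.+1 ((G ^+ s.+1)%:P).
Proof.
apply: nlm_inM; first by apply: leq_trans (size_polyC_leq1 _) _.
move=> i; rewrite shiftC; apply: nlmC; rewrite rmorphXn /=.
exact: dvdp_exp2r (G_root0 i).
Qed.

Lemma inM_mulX s l (Q : P2) : inM alpha rp s l Q ->
  inM alpha rp s.+1 l.+1 (Q * ('X - R%:P)).
Proof.
move=> HQ; apply: nlm_inM.
  apply: leq_trans (size_mul_leq _ _) _; rewrite size_XsubC.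
  by case: HQ => H _; lia.
move=> i; rewrite shiftM -addn1; apply: nlmM; first exact: inM_nlm HQ.
by have [h [Hh ->]] := shift_lin i; apply: nlm_lin.
Qed.


Lemma hX i : 'X %| R \Po ('X + (alpha i)%:P) - (rp i)%:P.
Proof.
rewrite -[X in X %| _]subr0 dvdp_XsubCl; apply/rootP.
by rewrite hornerD hornerN hornerC horner_comp hornerD hornerX hornerC add0r hR subrr.
Qed.

Lemma shift_horner i (Q : P2) :
  (shiftXY (alpha i) (rp i) Q).[R \Po ('X + (alpha i)%:P) - (rp i)%:P]
  = Q.[R] \Po ('X + (alpha i)%:P).
Proof.
have ->: R \Po ('X + (alpha i)%:P) - (rp i)%:P
   = comp_poly ('X + (alpha i)%:P) (R - (rp i)%:P).
  by rewrite rmorphB /= comp_polyC.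
rewrite shiftE horner_map /= horner_comp hornerD hornerX hornerC subrK.
by [].
Qed.

Lemma inM_decomp s l (Q : P2) : inM alpha rp s.+1 l.+1 Q ->
  exists Q', [/\ inM alpha rp s l Q', G ^+ s.+1 %| Q.[R]
             & Q = (Q.[R])%:P + Q' * ('X - R%:P)].
Proof.
move=> HQ.
have [Q' EQ] : exists Q', Q - (Q.[R])%:P = Q' * ('X - R%:P).
  by apply/factor_theorem; rewrite /root hornerD hornerN hornerC subrr.
have key : forall i, 'X ^+ s.+1 %| Q.[R] \Po ('X + (alpha i)%:P).
  move=> i; rewrite -shift_horner; apply: nlm_horner; last exact: hX.
  exact: inM_nlm HQ.
exists Q'; split; last by rewrite -EQ addrC subrK.
- apply: nlm_inM.
    have [->|Q'0] := eqVneq Q' 0; first by rewrite size_poly0.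
    have : (size (Q - (Q.[R])%:P)%R <= l.+2)%N.
      apply: leq_trans (size_add _ _) _; rewrite geq_max size_opp.
      case: HQ => -> _ /=; apply: leq_trans (size_polyC_leq1 _) _; by [].
    rewrite EQ size_Mmonic ?monicXsubC // size_XsubC; lia.
  move=> i.
  have HS : nlm s.+1 (shiftXY (alpha i) (rp i) (Q - (Q.[R])%:P)).
    rewrite shiftB shiftC; apply: nlmD; first exact: inM_nlm HQ.
    by apply: nlmN; apply: nlmC; apply: key.
  move: HS; rewrite EQ shiftM.
  have [h [Hh ->]] := shift_lin i.
  exact: nlm_cancel.
- rewrite /Gpoly; apply: (@prod_dvd _ n alpha xpredT) => // i _.
  have := dvdp_comp_poly ('X - (alpha i)%:P) (key i).
  by rewrite comp_polyXaddC_K comp_Xn_poly.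
Qed.


Lemma sigXR : sig ('X - R%:P) = L%:P * ('X - (R %/ L)%:P).
Proof.
rewrite sigB sigX sigC -{1}(divpK L_dvd_R) polyCM mulrBr [_ * L%:P]mulrC.
by [].
Qed.

End Main.

Section W.
Variable F : finFieldType.
Local Notation P2 := {poly {poly F}}.

Lemma wdeg_ge (Q : P2) (t : nat) : Q`_t != 0 ->
  (size Q`_t)%:Z - 1 - t%:Z <= wdeg Q.
Proof.
move=> Qt; have tQ : (t < size Q)%N.
  by rewrite ltnNge; apply: contra Qt => /(nth_default 0) ->.
rewrite /wdeg; exact: (@le_bigmax_cond _ _ _ _ (Ordinal tQ)).
Qed.

Lemma wdeg_eq (Q : P2) : Q != 0 ->
  exists t : nat, Q`_t != 0 /\ wdeg Q = (size Q`_t)%:Z - 1 - t%:Z.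
Proof.
move=> Q0; have sQ : (0 < size Q)%N by rewrite size_poly_gt0.
have sQ1 : ((size Q).-1 < size Q)%N by rewrite prednK.
have P0 : Q`_(Ordinal sQ1) != 0.
  by rewrite /= -lead_coefE lead_coef_eq0.
have H : forall i : 'I_(size Q), Q`_i != 0 ->
    - (size Q)%:Z <= (size Q`_i)%:Z - 1 - (i : nat)%:Z.
  move=> i _; have := ltn_ord i; lia.
have [j Pj E] := @eq_bigmax _ _ _ (- (size Q)%:Z) (Ordinal sQ1)
   (fun i : 'I_(size Q) => Q`_i != 0) (fun i : 'I_(size Q) =>
   ((size Q`_i)%:Z - 1 - (i : nat)%:Z)) P0 H.
by exists j; split => //; rewrite /wdeg E.
Qed.

End W.

Section Popov.
Variable F : finFieldType.

Lemma LP_spec m m' (A : 'M[{poly F}]_(m, m'.+1)) i :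
  exists jL : 'I_m'.+1, [/\ LP A i = jL, size (A i jL) = rowdeg A i
    & forall j : 'I_m'.+1, (jL < j)%N -> (size (A i j) < rowdeg A i)%N].
Proof.
case: (@arg_maxnP _ ord0 xpredT (fun j : 'I_m'.+1 => size (A i j))) => // j1 _ Hj1.
have E1 : rowdeg A i = size (A i j1).
  apply/eqP; rewrite eqn_leq; apply/andP; split.
    by apply/bigmax_leqP => j _; apply: Hj1.
  exact: leq_bigmax.
set P := fun j : 'I_m'.+1 => size (A i j) == rowdeg A i.
case: (@arg_maxnP _ j1 P (fun j : 'I_m'.+1 => nat_of_ord j)); first by rewrite /P E1.
move=> jL PjL HjL.
have LPE : LP A i = jL.
  apply/eqP; rewrite eqn_leq; apply/andP; split.
    by apply/bigmax_leqP => j Pj; apply: HjL.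
  exact: (leq_bigmax_cond jL PjL).
exists jL; split => //; first exact/eqP.
move=> j ltj; rewrite ltn_neqAle; apply/andP; split.
  apply/negP => Pj; have := HjL j Pj; lia.
exact: leq_bigmax.
Qed.

Lemma pdeg m m' (A : 'M[{poly F}]_(m, m'.+1)) (c : 'I_m -> {poly F}) i1 :
  weak_popov A -> (forall i, (0 < rowdeg A i)%N) -> c i1 != 0 ->
  exists i0 (j : 'I_m'.+1), c i0 != 0 /\
    size (\sum_i c i * A i j) = (size (c i0) + rowdeg A i0).-1.
Proof.
move=> wp rpos ci1.
set E := fun i => if c i == 0 then 0%N else (size (c i) + rowdeg A i)%N.
case: (@arg_maxnP _ i1 xpredT E) => // ie _ Hie.
have Epos : (0 < E ie)%N.
  apply: leq_trans (Hie i1 isT); rewrite /E (negPf ci1).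
  by rewrite addn_gt0 size_poly_gt0 ci1.
case: (@arg_maxnP _ ie (fun i => E i == E ie) (fun i => LP A i)) => // iS His Hmax.
have cis : c iS != 0.
  by apply/negP => /eqP c0; move: His Epos; rewrite /E c0 eqxx => /eqP <-.
have Eis : E iS = (size (c iS) + rowdeg A iS)%N by rewrite /E (negPf cis).
have [p [LPp sizep gtp]] := LP_spec A iS.
exists iS, p; split => //.
rewrite (bigD1 iS) //=.
have Api : A iS p != 0 by rewrite -size_poly_gt0 sizep.
have Hmain : size (c iS * A iS p) = (size (c iS) + rowdeg A iS).-1.
  by rewrite size_mul // sizep.
rewrite size_addl Hmain //.
set N := (size (c iS) + rowdeg A iS).-1.
have Npos : (0 < N)%N by rewrite /N; have := rpos iS; have := size_poly_gt0 (c iS); rewrite cis; lia.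
apply: (big_ind (fun q : {poly F} => (size q < N)%N)).
- by rewrite size_poly0.
- by move=> x y hx hy; apply: leq_ltn_trans (size_add _ _) _; rewrite gtn_max hx hy.
move=> i nis.
have [ci0|ci0] := eqVneq (c i) 0; first by rewrite ci0 mul0r size_poly0.
apply: leq_ltn_trans (size_mul_leq _ _) _.
have Ei : E i = (size (c i) + rowdeg A i)%N by rewrite /E (negPf ci0).
have EiE := Hie i isT.
have szA : (size (A i p) <= rowdeg A i)%N.
  exact: leq_bigmax.
have sci : (0 < size (c i))%N by rewrite size_poly_gt0.
have [EiEq|EiLt] := eqVneq (E i) (E ie).
  have LPle := Hmax i (introT eqP EiEq).
  have LPne : LP A i != LP A iS.
    by apply/negP => /eqP /wp /eqP; rewrite (negPf nis).
  have [jLi [LPi _ gti]] := LP_spec A i.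
  have := gti p ltac:(rewrite -LPi -LPp; lia).
  move: EiEq; rewrite -(eqP His) Eis Ei /N => /eqP; lia.
have : (E i < E ie)%N by rewrite ltn_neqAle EiLt; exact: EiE.
move: (eqP His); rewrite Eis Ei /N; lia.
Qed.


Lemma coef_row l (B : 'M[{poly F}]_l.+1) i j :
  (rowpoly B i)`_j = if (j < l.+1)%N then B i (inord j) else 0.
Proof.
rewrite /rowpoly coef_sum.
under eq_bigr do rewrite coefCM coefXn.
case: ifP => jl.
  rewrite (bigD1 (inord j)) //= inordK // eqxx mulr1 big1 ?addr0 // => t tj.
  case: eqP => [jt|]; last by rewrite mulr0.
  by move: tj; rewrite jt -[X in inord X]/(nat_of_ord t) inord_val eqxx.
apply: big1 => t _; case: eqP => [jt|]; last by rewrite mulr0.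
by move: (ltn_ord t); rewrite -jt jl.
Qed.

Lemma part1 l (Mod : {poly {poly F}} -> Prop) (B : 'M[{poly F}]_l.+1) :
  is_basis Mod (rowpoly B) -> weak_popov (B *m Wbar F l) ->
  exists i : 'I_l.+1, forall Q, Mod Q -> Q != 0 ->
    wdeg (rowpoly B i) <= wdeg Q.
Proof.
case=> Hin Hind Hspan wp.
set A := B *m Wbar F l.
have AE : forall i j, A i j = B i j * 'X^(l - j).
  by move=> i j; rewrite /A /Wbar mul_mx_diag mxE mxE.
have rowB : forall i (t : 'I_l.+1), (rowpoly B i)`_t = B i t.
  by move=> i t; rewrite coef_row ltn_ord inord_val.
have rowpos : forall i, (0 < rowdeg A i)%N.
  move=> i; have : rowpoly B i != 0.
    apply/negP => /eqP r0.
    have H0 : \sum_(j < l.+1) (((j == i)%:R : {poly F})%:P * rowpoly B j) = 0.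
      rewrite (bigD1 i) //= eqxx mul1r r0 add0r big1 // => j /negPf ->.
      by rewrite mul0r.
    by have := Hind _ H0 i; rewrite eqxx => /eqP; rewrite oner_eq0.
  move=> r0; have [t Bt] : exists t : 'I_l.+1, B i t != 0.
    apply/existsP; apply: contraR r0 => /existsPn H.
    by rewrite /rowpoly big1 // => t _; move/negPn: (H t) => /eqP ->; rewrite mul0r.
  apply: leq_trans (leq_bigmax t); rewrite /= AE size_mulXn //.
  by rewrite -size_poly_gt0 in Bt; lia.
case: (@arg_minnP _ ord0 xpredT (rowdeg A)) => // i1 _ Hi1.
exists i1 => Q MQ Q0.
have [c EQ] := Hspan Q MQ.
have [i2 ci2] : exists i, c i != 0.
  apply/existsP; apply: contraR Q0 => /existsPn H; rewrite EQ big1 // => i _.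
  by move/negPn: (H i) => /eqP ->; rewrite mul0r.
have [i0 [p [ci0 Hs]]] := pdeg wp rowpos ci2.
have Qp : \sum_i c i * A i p = Q`_p * 'X^(l - p).
  rewrite EQ coef_sum mulr_suml; apply: eq_bigr => i _.
  by rewrite coefCM rowB AE mulrA.
rewrite Qp -/A in Hs.
have ge1 : (rowdeg A i1 <= size (Q`_p * 'X^(l - p))%R)%N.
  rewrite Hs; apply: leq_trans (Hi1 i0 isT) _.
  have := size_poly_gt0 (c i0); rewrite ci0; lia.
have Qp0 : Q`_p != 0.
  apply/negP => /eqP Q0p; move: ge1; rewrite Q0p mul0r size_poly0.
  by have := rowpos i1; lia.
rewrite size_mulXn // in ge1.
have r0 : rowpoly B i1 != 0.
  apply/negP => /eqP r0; move: (rowpos i1).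
  rewrite lt0n; apply/negP; rewrite negbK; apply/eqP/eqP; rewrite -leqn0.
  apply/bigmax_leqP => j _; by rewrite AE -rowB r0 coef0 mul0r size_poly0.
have [t [rt ->]] := wdeg_eq r0.
have tl : (t < l.+1)%N by move: rt; rewrite coef_row; case: ifP => //; rewrite eqxx.
have := leq_bigmax (F := fun j => size (A i1 j)) (Ordinal tl).
rewrite AE -rowB /= size_mulXn //= => h2.
have := wdeg_ge Qp0.
have := ltn_ord p.
have h3 : (l - t + size ((rowpoly B i1)`_t)%R <= rowdeg A i1)%N := h2.
move: h3 ge1 (ltn_ord p) (wdeg_ge Qp0) tl.
set a := size ((rowpoly B i1)`_t).
set b := size (Q`_p).
set r := rowdeg A i1. move=> *; lia.
Qed.

End Popov.

Unset Implicit Arguments. Set Strict Implicit. Set Printing Implicit Defensive.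

Theorem lemma13 (F : finFieldType) (n k : nat)
  (hk : (0 < k)%N) (hkn : (k < n)%N) (hnq : (n < #|F|)%N)
  (alpha : 'I_n -> F) (alpha_inj : injective alpha)
  (alpha_nz : forall i, alpha i != 0)
  (w : 'I_n -> F) (w_nz : forall i, w i != 0)
  (r : 'I_n -> F) (r_zero : forall i : 'I_n, (i < k)%N -> r i = 0)
  (R : {poly F}) (R_size : (size R <= n)%N)
  (R_interp : forall i : 'I_n, R.[alpha i] = r i / w i)
  (s l : nat) (hs : (0 < s)%N) (hsl : (s <= l)%N) :
  let rp := fun i : 'I_n => r i / w i in
  let L := Lpoly k alpha in
  let Gb := Gpoly alpha %/ L in
  let Rb := R %/ L in
  (forall B : 'M[{poly F}]_l.+1,
     is_basis (inPhiM k alpha rp s l) (rowpoly B) ->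
     weak_popov (B *m Wbar F l) ->
     exists i : 'I_l.+1,
       forall Q, inPhiM k alpha rp s l Q -> Q != 0 ->
         wdeg (rowpoly B i) <= wdeg Q)
  /\
  (forall b : 'I_l.+1 -> {poly {poly F}},
     is_basis (inPhiM k alpha rp s l) b ->
     is_basis (inPhiM k alpha rp s l.+1)
       (fun i : 'I_l.+2 =>
          if (i < l.+1)%N then b (inord i)
          else (L%:P * 'X) ^+ (l - s).+1 * ('X - Rb%:P) ^+ s)
     /\
     is_basis (inPhiM k alpha rp s.+1 l.+1)
       (fun i : 'I_l.+2 =>
          if (i == 0 :> nat) then (Gb ^+ s.+1)%:P
          else b (inord i.-1) * ('X - Rb%:P))).
Proof.
move=> rp L Gb Rb.
have rp0 : forall i : 'I_n, (i < k)%N -> rp i = 0.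
  by move=> i ik; rewrite /rp r_zero // mul0r.
have hR : forall i, R.[alpha i] = rp i := R_interp.
have L0 : L != 0 := L_neq0 k alpha.
have HR : R = Rb * L by rewrite /Rb divpK //; apply: (L_dvd_R alpha_inj rp0 hR).
have HG : Gpoly alpha = Gb * L by rewrite /Gb divpK //; apply: L_dvd_G.
have Gb0 : Gb != 0.
  apply/negP => /eqP Gb0; move: HG; rewrite Gb0 mul0r /Gpoly => /eqP.
  by rewrite (negPf (monic_neq0 (monic_prod_XsubC _ _ _))).
split; first by move=> B Hb wp; exact: part1 Hb wp.
move=> b [bin bind bspan].
have PhiE := inPhiM_E alpha_inj rp0.
have sigXR' := sigXR alpha_inj rp0 hR.
have sigXn' : forall (P : {poly {poly F}}) e,
    sig k alpha (P ^+ e) = sig k alpha P ^+ e.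
  by move=> P e; rewrite /sig rmorphXn.
have polyCXn : forall (p : {poly F}) e, (p ^+ e)%:P = p%:P ^+ e.
  by move=> p e; rewrite rmorphXn.
split.
- set Q0 : {poly {poly F}} := 'X ^+ (l - s).+1 * ('X - R%:P) ^+ s.
  set M : {poly {poly F}} := 'X ^+ (l - s).+1 * ('X - Rb%:P) ^+ s.
  set Q0P := (L%:P * 'X) ^+ (l - s).+1 * ('X - Rb%:P) ^+ s.
  have sigQ0 : sig k alpha Q0 = (L ^+ s)%:P * Q0P.
    rewrite /Q0 sigM sigXn sigXn' sigXR' exprMn polyCXn.
    by rewrite /Q0P !exprMn mulrCA.
  have Q0PE : Q0P = (L ^+ (l - s).+1)%:P * M.
    by rewrite /Q0P /M exprMn polyCXn mulrA.
  have monM : M \is monic by rewrite monicMl ?monicXn // monic_exp // monicXsubC.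
  have sizeM : size M = l.+2.
    rewrite size_monicM ?monicXn ?expf_neq0 ?polyXsubC_eq0 //.
    by rewrite size_polyXn size_exp_XsubC; lia.
  have coefM : M`_l.+1 = 1.
    by move: (monicP monM); rewrite lead_coefE sizeM.
  have monQ0 : Q0 \is monic by rewrite monicMl ?monicXn // monic_exp // monicXsubC.
  have sizeQ0 : size Q0 = l.+2.
    rewrite size_monicM ?monicXn ?expf_neq0 ?polyXsubC_eq0 //.
    by rewrite size_polyXn size_exp_XsubC; lia.
  have coefQ0 : Q0`_l.+1 = 1.
    by move: (monicP monQ0); rewrite lead_coefE sizeQ0.
  have coefQ0P : Q0P`_l.+1 = L ^+ (l - s).+1.
    by rewrite Q0PE coefCM coefM mulr1.
  split.
  + move=> i; case: ifP => il.
      have := bin (inord i); rewrite !PhiE => -[Q [HQ E]].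
      by exists Q; split => //; apply: inM_mono (leqnSn l) HQ.
    apply/PhiE; exists Q0; split; last by rewrite sigQ0.
    by have := inM_Q0 hR hsl.
  + move=> c Hc.
    rewrite big_ord_recr /= ltnn in Hc.
    move: Hc; under eq_bigr => i _ do rewrite ltn_ord inord_val.
    move=> Hc.
    have cmax : c ord_max = 0.
      have := congr1 (fun p : {poly {poly F}} => p`_(l.+1)) Hc.
      rewrite /= coefD coef_sum coef0 big1 ?add0r.
        rewrite coefCM coefQ0P => /eqP; rewrite mulf_eq0 expf_eq0 (negPf L0) andbF orbF.
        by move/eqP.
      move=> i _; rewrite coefCM nth_default ?mulr0 //; exact: inPhiM_size (bin i).
    rewrite cmax polyC0 mul0r addr0 in Hc.
    have cw := bind _ Hc.
    move=> i; have [il|li] := ltnP i l.+1.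
      have -> : i = widen_ord (leqnSn l.+1) (Ordinal il) by apply: val_inj.
      exact: cw.
    have -> : i = ord_max by apply: val_inj => /=; have := ltn_ord i; lia.
    exact: cmax.
  + move=> P /PhiE [Q [HQ EQ]].
    set cc := Q`_(l.+1).
    have HQ0 : inM alpha rp s l.+1 Q0 := inM_Q0 hR hsl.
    have HQ1 : inM alpha rp s l (Q - cc%:P * Q0).
      apply: (inM_sub HQ HQ0).
      apply/leq_sizeP => j lj; rewrite coefB coefCM.
      have [->|ljj] := eqVneq j l.+1; first by rewrite coefQ0 mulr1 subrr.
      have lj2 : (l.+2 <= j)%N by rewrite ltn_neqAle eq_sym ljj lj.
      case: HQ => sQ _.
      rewrite !nth_default ?mulr0 ?subr0 //; first by rewrite sizeQ0.
      exact: leq_trans sQ lj2.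
    have [d Ed] := bspan _ (ex_intro _ (Q - cc%:P * Q0) (conj HQ1 erefl)).
    have EP : P = phi L s (Q - cc%:P * Q0) + cc%:P * Q0P.
      apply: (@LsC_inj _ _ k alpha s).
      rewrite mulrDr (phiE alpha_inj rp0 HQ1) [X in _ = _ + X]mulrCA -sigQ0 EQ.
      by rewrite sigB sigM sigC subrK.
    exists (fun i : 'I_l.+2 => if (i < l.+1)%N then d (inord i) else cc).
    rewrite big_ord_recr /= ltnn EP Ed; congr (_ + _).
    by apply: eq_bigr => i _; rewrite ltn_ord inord_val.
- split.
  + move=> i; case: ifP => i0.
      apply/PhiE; exists ((Gpoly alpha ^+ s.+1)%:P); split; first exact: inM_G.
      by rewrite sigC HG -polyCM exprMn mulrC.
    have := bin (inord i.-1); move/PhiE => [Q [HQ E]].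
    apply/PhiE; exists (Q * ('X - R%:P)); split; first by have := inM_mulX hR HQ.
    rewrite sigM -E sigXR' exprSr polyCM -!mulrA; congr (_ * _).
    by rewrite mulrCA.
  + move=> c Hc.
    rewrite big_ord_recl /= in Hc.
    move: Hc; under eq_bigr => i _ do rewrite add0n inord_val.
    move=> Hc.
    have c0 : c ord0 = 0.
      have := congr1 (fun p : {poly {poly F}} => p.[Rb]) Hc.
      rewrite /= hornerD horner_sum hornerCM hornerC big1 ?addr0 ?horner0.
        by move/eqP; rewrite mulf_eq0 expf_eq0 (negPf Gb0) andbF orbF => /eqP.
      by move=> i _; rewrite hornerCM hornerM hornerXsubC subrr !mulr0.
    rewrite c0 mul0r add0r in Hc.
    move: Hc; under eq_bigr => i _ do rewrite mulrA.
    rewrite -mulr_suml => /eqP; rewrite mulf_eq0 polyXsubC_eq0 orbF => /eqP Hc.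
    have cw := bind _ Hc.
    by move=> i; case: (unliftP ord0 i) => [j ->|->]; [exact: cw | exact: c0].
  + move=> P /PhiE [Q [HQ EQ]].
    have [Q' [HQ' Gdvd EQ']] := inM_decomp alpha_inj hR HQ.
    case/dvdpP: Gdvd => g Eg.
    have [d Ed] := bspan _ (ex_intro _ Q' (conj HQ' erefl)).
    have EP : P = (g * Gb ^+ s.+1)%:P + phi L s Q' * ('X - Rb%:P).
      apply: (@LsC_inj _ _ k alpha s.+1).
      rewrite EQ {1}EQ' sigD sigC sigM sigXR' Eg HG -(phiE alpha_inj rp0 HQ').
      rewrite -/L -/Rb [RHS]mulrDr; congr (_ + _).
        by rewrite -polyCM exprMn; congr polyC; ring.
      by rewrite exprSr polyCM; ring.
    exists (fun i : 'I_l.+2 => if (i == 0 :> nat) then g else d (inord i.-1)).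
    rewrite big_ord_recl /= EP Ed polyCM; congr (_ + _).
    rewrite mulr_suml; apply: eq_bigr => i _.
    by rewrite add0n inord_val mulrA.
Qed.
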